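(* Let $n\geq0$ be an integer and $i\in\{1,2,3\}$. Then $\dim_{\mathbb C}\mathscr M_n(x_i)=0$ if $n<t_i$, and $\dim_{\mathbb C}\mathscr M_n(x_i)=2(n-t_i+1)$ if $n\geq t_i$.
   Context: Fix real numbers $k_1,k_2,k_3$. For $i=1,2,3$ let $R_i$ be the operator on functions on $\mathbb R^3$ replacing $x_i$ by $-x_i$, and $T_if=\frac{\partial f}{\partial x_i}+k_i\frac{f-R_if}{x_i}$ (Dunkl operators). Let $\sigma_1=\begin{pmatrix}0&1\\1&0\end{pmatrix}$, $\sigma_2=\begin{pmatrix}0&-\sqrt{-1}\\ \sqrt{-1}&0\end{pmatrix}$, $\sigma_3=\begin{pmatrix}1&0\\0&-1\end{pmatrix}$, and let $e_i$ act on $\mathbb C^2$ by $\sigma_i$. Tensor products are over $\mathbb R$; $\mathbb R[\cdots]_m$ denotes homogeneous polynomials of degree $m$. Let $\mathbf D=e_1\otimes T_1+e_2\otimes T_2+e_3\otimes T_3$ and $\mathscr M_n=\ker(\mathbf D|_{\mathbb C^2\otimes\mathbb R[x_1,x_2,x_3]_n})$. For $i=1,2,3$ set $t_i=-2k_i$ if $2k_i$ is an odd negative integer, and $t_i=\infty$ otherwise. For $i=1,2,3$, $\mathscr M_n(x_i)=\mathscr M_n\cap\bigoplus_{j=t_i}^n\mathbb C^2\otimes(x_i^j\cdot\mathbb R[x_p,x_q]_{n-j})$ where $\{p,q\}=\{1,2,3\}\setminus\{i\}$, interpreted as $\{0\}$ if $n<t_i$. *)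

(* Defs.v *)
From HB Require Import structures.
From mathcomp Require Import all_boot all_order all_algebra.
From mathcomp Require Import mpoly.
Set Implicit Arguments. Unset Strict Implicit. Unset Printing Implicit Defensive.
Import Order.TTheory GRing.Theory Num.Theory.
Local Open Scope ring_scope.

(* Complex field: an arbitrary numClosedFieldType C (e.g. complex numbers);
   "real numbers" k_i are elements of C with k_i \is Num.real.
   Variables x_1,x_2,x_3 are indexed by 'I_3 = {0,1,2}.
   C^2 (x)_R R[x1,x2,x3]  =  C[x1,x2,x3]^2, modelled as {ffun 'I_2 -> {mpoly C[3]}}. *)

Section Dunkl.
Variable C : numClosedFieldType.
Notation P := {mpoly C[3]}.

Definition refl (i : 'I_3) (f : P) : P :=
  comp_mpoly [tuple (if j == i then - 'X_j else 'X_j) | j < 3] f.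

(* the quotient (g)/x_i of a polynomial g by the monomial x_i
   (exact when x_i divides g): every monomial x^m is sent to x^(m - e_i) *)
Definition divX (i : 'I_3) (g : P) : P :=
  \sum_(m <- msupp g) g@_m *: 'X_[m - U_(i)].

Definition dunkl (k : 'I_3 -> C) (i : 'I_3) (f : P) : P :=
  mderiv i f + k i *: divX i (f - refl i f).

Definition sigma (j : 'I_3) : 'M[C]_2 :=
  if val j == 0%N then \matrix_(r < 2, s < 2) (if r == s then 0 else 1)
  else if val j == 1%N then
    \matrix_(r < 2, s < 2)
      (if r == s then 0 else if val r == 0%N then - 'i else 'i)
  else \matrix_(r < 2, s < 2)
      (if r == s then (if val r == 0%N then 1 else -1) else 0).

Definition dirac (k : 'I_3 -> C) (v : {ffun 'I_2 -> P}) : {ffun 'I_2 -> P} :=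
  [ffun r => \sum_(j < 3) \sum_(s < 2) sigma j r s *: dunkl k j (v s)].

Definition homogeneous (n : nat) (f : P) : Prop :=
  forall m, m \in msupp f -> mdeg m = n.

Definition Mn (k : 'I_3 -> C) (n : nat) (v : {ffun 'I_2 -> P}) : Prop :=
  (forall r, homogeneous n (v r)) /\ dirac k v = 0.

(* t_i as an element of nat + {infinity} (None = infinity):
   tparam k t  <->  t is the value of t_i = -2k if 2k is an odd negative integer,
   infinity otherwise *)
Definition tparam (k : C) (t : option nat) : Prop :=
  match t with
  | Some t => odd t /\ 2 * k = - (t%:R)
  | None => forall t : nat, odd t -> 2 * k != - (t%:R)
  end.

(* M_n(x_i) with lower bound t (t = None meaning infinity, i.e. {0}):
   elements of M_n all of whose monomials x^m have m_i >= t *)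
Definition Mnx (k : 'I_3 -> C) (n : nat) (i : 'I_3) (t : option nat)
    (v : {ffun 'I_2 -> P}) : Prop :=
  match t with
  | None => v = 0
  | Some t => Mn k n v /\ forall r m, m \in msupp (v r) -> (t <= m i)%N
  end.

End Dunkl.

Definition dimC_eq (C : fieldType) (V : lmodType C) (S : V -> Prop) (d : nat) : Prop :=
  exists b : 'I_d -> V,
    (forall j, S (b j)) /\
    (forall c : 'I_d -> C, \sum_(j < d) c j *: b j = 0 -> forall j, c j = 0) /\
    (forall v, S v -> exists c : 'I_d -> C, v = \sum_(j < d) c j *: b j).

(* Main.v *)
Require Import Defs.
From HB Require Import structures.
From mathcomp Require Import all_boot all_order all_algebra.
From mathcomp Require Import mpoly.
From mathcomp Require Import ring zify.
Import GRing.Theory Num.Theory.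
Local Open Scope ring_scope.

Section S.
Variable C : numClosedFieldType.
Notation P := {mpoly C[3]}.

Definition cc (kk : C) (e : nat) : C := e%:R + kk * (1 - (-1) ^+ e).

Lemma sum_seq_pick (s : seq 'X_{1..3}) (F : 'X_{1..3} -> C) m :
  uniq s -> (m \notin s -> F m = 0) ->
  \sum_(m' <- s) F m' * (m' == m)%:R = F m.
Proof.
move=> us hF; case: (boolP (m \in s)) => ms.
  rewrite (bigD1_seq m) //= eqxx mulr1 big1 ?addr0 // => j /negbTE ->.
  by rewrite mulr0.
rewrite big1_seq ?hF // => j /andP [_ js]; case: eqP => [e|]; last by rewrite mulr0.
by move: ms; rewrite -e js.
Qed.

Lemma refl_X (i : 'I_3) m : refl i ('X_[m] : P) = (-1) ^+ (m i) *: 'X_[m].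
Proof.
rewrite /refl comp_mpolyX.
have -> : \prod_(j < 3) tnth [tuple (if j == i then - 'X_j else 'X_j) | j < 3] j ^+ m j
   = \prod_(j < 3) (((if j == i then -1 else 1) : C) *: ('X_j : P)) ^+ m j.
  apply: eq_bigr => j _; rewrite tnth_mktuple; case: eqP => _.
    by rewrite scaleN1r. by rewrite scale1r.
rewrite (eq_bigr (fun j => ((if j == i then -1 else 1) ^+ m j : C) *: ('X_j : P) ^+ m j)); last first.
  by move=> j _; rewrite -exprZn.
rewrite scaler_prod -mpolyXE_id; congr (_ *: _).
rewrite (bigD1 i) //= eqxx big1 ?mulr1 // => j /negbTE ->; by rewrite expr1n.
Qed.

Lemma mcoeff_refl (i : 'I_3) (f : P) m : (refl i f)@_m = (-1) ^+ (m i) * f@_m.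
Proof.
rewrite /refl comp_mpolyEX raddf_sum /=.
rewrite (eq_bigr (fun m' => (f@_m' * (-1) ^+ (m' i)) * (m' == m)%:R)); last first.
  move=> m' _; rewrite -/(refl i _) refl_X scalerA mcoeffZ mcoeffX //.
rewrite (@sum_seq_pick _ (fun m' => f@_m' * (-1) ^+ (m' i))).
- by rewrite mulrC.
- exact: msupp_uniq.
by rewrite -mcoeff_eq0 => /eqP ->; rewrite mul0r.
Qed.

Lemma subU_eq (i : 'I_3) (m m' : 'X_{1..3}) : (0 < m' i)%N ->
  (m' - U_(i) == m)%MM = (m' == m + U_(i))%MM.
Proof.
move=> h; apply/eqP/eqP => [<-|->]; last by rewrite addmK.
apply/mnmP => j; rewrite mnmDE mnmBE mnm1E; case: eqP => [<-|].
  by rewrite subn1 addn1 prednK.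
by rewrite subn0 addn0.
Qed.

Lemma mcoeff_divX (i : 'I_3) (g : P) (m : 'X_{1..3}) :
  (forall m' : 'X_{1..3}, m' i = 0%N -> g@_m' = 0) -> (divX i g)@_m = g@_((m + U_(i))%MM).
Proof.
move=> hg; rewrite /divX raddf_sum /=.
rewrite (eq_bigr (fun m' => g@_m' * ((m' == m + U_(i))%MM)%:R)); last first.
  move=> m' _; rewrite mcoeffZ mcoeffX.
  case: (posnP (m' i)) => h; first by rewrite hg // !mul0r.
  by rewrite subU_eq.
rewrite (@sum_seq_pick _ (fun m' => g@_m')); [by [] | exact: msupp_uniq |].
by rewrite -mcoeff_eq0 => /eqP.
Qed.

Lemma mcoeff_dunkl (k : 'I_3 -> C) (j : 'I_3) (f : P) m :
  (dunkl k j f)@_m = cc (k j) (m j).+1 * f@_((m + U_(j))%MM).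
Proof.
rewrite /dunkl mcoeffD mcoeffZ mcoeff_deriv mcoeff_divX; last first.
  by move=> m' h; rewrite mcoeffB mcoeff_refl h expr0 mul1r subrr.
rewrite mcoeffB mcoeff_refl mnmDE mnm1E eqxx addn1 /cc.
by rewrite -mulr_natl; ring.
Qed.

Lemma mcoeff_dirac (k : 'I_3 -> C) (v : {ffun 'I_2 -> P}) r m :
  (dirac k v r)@_m = \sum_(j < 3) \sum_(s < 2)
      sigma C j r s * (cc (k j) (m j).+1 * (v s)@_((m + U_(j))%MM)).
Proof.
rewrite /dirac ffunE raddf_sum; apply: eq_bigr => j _.
rewrite raddf_sum; apply: eq_bigr => s _.
by rewrite /= mcoeffZ mcoeff_dunkl.
Qed.

Lemma ffD (T : finType) (R : zmodType) (f g : {ffun T -> R}) x : (f + g) x = f x + g x.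
Proof. by rewrite ffunE. Qed.
Lemma ffB (T : finType) (R : zmodType) (f g : {ffun T -> R}) x : (f - g) x = f x - g x.
Proof. by rewrite !ffunE. Qed.
Lemma ffZ (T : finType) (f : {ffun T -> P}) a x : (a *: f) x = a *: f x.
Proof. by rewrite ffunE. Qed.
Lemma ff0 (T : finType) x : (0 : {ffun T -> P}) x = 0.
Proof. by rewrite ffunE. Qed.

Lemma dirac_lin (k : 'I_3 -> C) a (u w : {ffun 'I_2 -> P}) :
  dirac k (a *: u + w) = a *: dirac k u + dirac k w.
Proof.
apply/ffunP => r; apply/mpolyP => m.
rewrite [LHS]mcoeff_dirac ffD ffZ mcoeffD mcoeffZ.
rewrite [X in _ = _ * X + _]mcoeff_dirac [X in _ = _ + X]mcoeff_dirac.
rewrite mulr_sumr -big_split; apply: eq_bigr => j _ /=.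
rewrite mulr_sumr -big_split; apply: eq_bigr => s _ /=.
rewrite ffD ffZ mcoeffD mcoeffZ; ring.
Qed.

Lemma sigma_sq (j : 'I_3) (r r' : 'I_2) :
  \sum_(s < 2) sigma C j r s * sigma C j s r' = (r == r')%:R.
Proof.
rewrite !big_ord_recr big_ord0 /= add0r /sigma.
case: j => [[|[|[|//]]] hj] /=; rewrite !mxE;
case: r => [[|[|//]] hr]; case: r' => [[|[|//]] hr'] /=; rewrite ?eqE /=;
try (rewrite ?mulr0 ?mul0r ?mulr1 ?addr0 ?add0r //).
all: try (by rewrite mulrN mulNr opprK -expr2 sqrCi).
all: try (by rewrite mulNr mulrN opprK -expr2 sqrCi).
all: try (by rewrite mulrNN mulr1).
all: by rewrite ?mulNr ?mulrN -expr2 sqrCi opprK.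
Qed.

Lemma sigma_inj (j : 'I_3) (x : 'I_2 -> C) :
  (forall r, \sum_(s < 2) sigma C j r s * x s = 0) -> forall s, x s = 0.
Proof.
move=> h s.
have : \sum_(r < 2) sigma C j s r * (\sum_(s' < 2) sigma C j r s' * x s') = 0.
  by rewrite big1 // => r _; rewrite h mulr0.
rewrite (eq_bigr (fun r => \sum_(s' < 2) sigma C j s r * sigma C j r s' * x s')); last first.
  by move=> r _; rewrite mulr_sumr; apply: eq_bigr => s' _; rewrite mulrA.
rewrite exchange_big /=.
rewrite (eq_bigr (fun s' => (s == s')%:R * x s')); last first.
  by move=> s' _; rewrite -mulr_suml sigma_sq.
rewrite (bigD1 s) //= eqxx mul1r big1 ?addr0 // => s' /negbTE.
by rewrite eq_sym => ->; rewrite mul0r.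
Qed.

Lemma uniq_kernel (k : 'I_3 -> C) (i : 'I_3) (t : nat) (w : {ffun 'I_2 -> P}) :
  (forall e, (t < e)%N -> cc (k i) e != 0) ->
  dirac k w = 0 ->
  (forall r (m : 'X_{1..3}), (m i <= t)%N -> (w r)@_m = 0) ->
  w = 0.
Proof.
move=> hc hD h0.
suff H : forall e r (m : 'X_{1..3}), (m i <= e)%N -> (w r)@_m = 0.
  by apply/ffunP => r; apply/mpolyP => m; rewrite ff0 mcoeff0; apply: (H (m i)).
elim=> [|e IH] r m hm; first by apply: h0; apply: leq_trans hm _.
case: (leqP (m i) e) => hme; first exact: IH.
have hmi : m i = e.+1 by apply/eqP; rewrite eqn_leq hm hme.
case: (leqP (m i) t) => hmt; first exact: h0.
pose m' := (m - U_(i))%MM.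
have hmm : m = (m' + U_(i))%MM by apply/eqP; rewrite -subU_eq ?hmi.
have hm'i : (m' i).+1 = m i by rewrite /m' mnmBE mnm1E eqxx subn1 hmi.
have hm'e : m' i = e by apply: succn_inj; rewrite hm'i.
have key : forall r', \sum_(s < 2) sigma C i r' s * (cc (k i) (m i) * (w s)@_m) = 0.
  move=> r'.
  have := mcoeff_dirac k w r' m'.
  rewrite hD ff0 mcoeff0 (bigD1 i) //= [X in _ + X]big1 ?addr0.
    by rewrite hm'i -hmm => <-.
  move=> j hj; apply: big1 => s _.
  rewrite IH ?mulr0 // mnmDE mnm1E (negbTE hj) addn0 hm'e //.
have := @sigma_inj i (fun s => cc (k i) (m i) * (w s)@_m) key => /(_ r) /eqP; rewrite mulf_eq0 (negbTE (hc _ hmt)) /=.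
by move/eqP.
Qed.

Lemma sigma_sq_apply (j : 'I_3) (r : 'I_2) (X : 'I_2 -> C) :
  \sum_(s < 2) sigma C j r s * \sum_(s' < 2) sigma C j s s' * X s' = X r.
Proof.
rewrite (eq_bigr (fun s => \sum_(s' < 2) sigma C j r s * sigma C j s s' * X s')); last first.
  by move=> s _; rewrite mulr_sumr; apply: eq_bigr => s' _; rewrite mulrA.
rewrite exchange_big /=.
rewrite (eq_bigr (fun s' => (r == s')%:R * X s')); last first.
  by move=> s' _; rewrite -mulr_suml sigma_sq.
rewrite (bigD1 r) //= eqxx mul1r big1 ?addr0 // => s' /negbTE.
by rewrite eq_sym => ->; rewrite mul0r.
Qed.

Section Constr.
Variables (k : 'I_3 -> C) (i : 'I_3) (t n : nat) (init : 'X_{1..3} -> 'I_2 -> C).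

Fixpoint H (d : nat) (m : 'X_{1..3}) (r : 'I_2) : C :=
  match d with
  | 0 => init m r
  | d'.+1 => - (cc (k i) (m i))^-1 * \sum_(s < 2) sigma C i r s *
       \sum_(j < 3 | j != i) \sum_(s' < 2) sigma C j s s' *
          (cc (k j) ((m - U_(i))%MM j).+1 * H d' ((m - U_(i)) + U_(j))%MM s')
  end.

Definition F (m : 'X_{1..3}) (r : 'I_2) : C :=
  if (t <= m i)%N then H (m i - t) m r else 0.

Definition V (m : 'X_{1..3}) (r : 'I_2) : C :=
  if mdeg m == n then F m r else 0.

Definition bvec : {ffun 'I_2 -> P} :=
  [ffun r => \sum_(m : 'X_{1..3 < n.+1}) V m r *: 'X_[m]].

Lemma mcoeff_bvec r m : (bvec r)@_m = V m r.
Proof.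
rewrite ffunE; case: (ltnP (mdeg m) n.+1) => hm.
  exact: (@mcoeff_mpoly _ _ (fun m => V m r)).
rewrite /V; have -> : (mdeg m == n) = false by apply/negbTE; rewrite neq_ltn hm orbT.
rewrite raddf_sum big1 // => b _ /=; rewrite mcoeffZ mcoeffX.
have : bmnm b != m.
  by apply/eqP => e; move: (valP b); rewrite /= e ltnS leqNgt hm.
by move/negbTE => ->; rewrite mulr0.
Qed.

Lemma HS d m r : H d.+1 m r = - (cc (k i) (m i))^-1 * \sum_(s < 2) sigma C i r s *
       \sum_(j < 3 | j != i) \sum_(s' < 2) sigma C j s s' *
          (cc (k j) ((m - U_(i))%MM j).+1 * H d ((m - U_(i)) + U_(j))%MM s').
Proof. by []. Qed.

Lemma bvec_dirac : (forall e, (t < e)%N -> cc (k i) e != 0) -> cc (k i) t = 0 ->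
  dirac k bvec = 0.
Proof.
move=> hc hct; apply/ffunP => r; apply/mpolyP => m'.
rewrite ff0 mcoeff0 mcoeff_dirac.
have hdeg j : mdeg (m' + U_(j))%MM = (mdeg m').+1 by rewrite mdegD mdeg1 addn1.
case: (eqVneq (mdeg m').+1 n) => hn; last first.
  apply: big1 => j _; apply: big1 => s _.
  by rewrite mcoeff_bvec /V hdeg (negbTE hn) !mulr0.
rewrite (eq_bigr (fun j => \sum_(s < 2) sigma C j r s *
     (cc (k j) (m' j).+1 * F (m' + U_(j))%MM s))); last first.
  by move=> j _; apply: eq_bigr => s _; rewrite mcoeff_bvec /V hdeg hn eqxx.
have hUj j : j != i -> (m' + U_(j))%MM i = m' i.
  by move=> hj; rewrite mnmDE mnm1E (negbTE hj) addn0.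
have hUi : (m' + U_(i))%MM i = (m' i).+1 by rewrite mnmDE mnm1E eqxx addn1.
rewrite (bigD1 i) //=.
case: (ltnP (m' i) t) => ht.
  rewrite [X in _ + X]big1 ?addr0; last first.
    by move=> j hj; apply: big1 => s _; rewrite /F hUj // leqNgt ht !mulr0.
  apply: big1 => s _; rewrite /F hUi; case: leqP => h; last by rewrite !mulr0.
  have -> : (m' i).+1 = t by apply/eqP; rewrite eqn_leq h ht.
  by rewrite hct mul0r mulr0.
pose X s' := \sum_(j < 3 | j != i) \sum_(s'' < 2) sigma C j s' s'' *
   (cc (k j) (m' j).+1 * H (m' i - t) (m' + U_(j))%MM s'').
have -> : \sum_(j < 3 | j != i) \sum_(s < 2) sigma C j r s *
     (cc (k j) (m' j).+1 * F (m' + U_(j))%MM s) = X r.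
  apply: eq_bigr => j hj; apply: eq_bigr => s _.
  by rewrite /F hUj // ht.
rewrite (eq_bigr (fun s => - (sigma C i r s * \sum_(s'' < 2) sigma C i s s'' * X s''))); last first.
  move=> s _; rewrite /F hUi ltnW // subSn // HS hUi addmK.
  have hc0 : cc (k i) (m' i).+1 != 0 by apply: hc.
  have E (a y : C) : a != 0 -> a * (- a^-1 * y) = - y.
    by move=> ha; rewrite mulrA mulrN mulfV // mulN1r.
  by rewrite E // mulrN.
by rewrite sumrN sigma_sq_apply addNr.
Qed.

End Constr.

Lemma cc_t (kk : C) t : odd t -> 2 * kk = - t%:R -> cc kk t = 0.
Proof.
move=> ht h; rewrite /cc -signr_odd ht expr1 opprK.
have -> : kk * (1 + 1) = 2 * kk by rewrite mulrC.
by rewrite h addrN.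
Qed.

Lemma cc_ne (kk : C) t e : odd t -> 2 * kk = - t%:R -> (t < e)%N -> cc kk e != 0.
Proof.
move=> ht h lte; rewrite /cc -signr_odd.
case he: (odd e).
  rewrite expr1 opprK.
  have -> : kk * (1 + 1) = 2 * kk by rewrite mulrC.
  rewrite h -(subnK (ltnW lte)) natrD addrK pnatr_eq0 subn_eq0 -ltnNge //.
rewrite expr0 subrr mulr0 addr0 pnatr_eq0 -lt0n.
exact: leq_ltn_trans (leq0n t) lte.
Qed.

Definition pI (i : 'I_3) : 'I_3 :=
  if val i == 0%N then @Ordinal 3 1 isT else @Ordinal 3 0 isT.
Definition qI (i : 'I_3) : 'I_3 :=
  if val i == 2%N then @Ordinal 3 1 isT else @Ordinal 3 2 isT.

Lemma pI_neq i : pI i != i.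
Proof. by case: i => [[|[|[|//]]] hi]. Qed.
Lemma qI_neq i : qI i != i.
Proof. by case: i => [[|[|[|//]]] hi]. Qed.
Lemma pq_neq i : pI i != qI i.
Proof. by case: i => [[|[|[|//]]] hi]. Qed.
Lemma ijcover i (j : 'I_3) : j != i -> j != pI i -> j = qI i.
Proof.
by case: i => [[|[|[|//]]] hi]; case: j => [[|[|[|//]]] hj]; rewrite /pI /qI //=;
  move=> h1 h2; apply/val_inj.
Qed.

Lemma mdeg3 i (m : 'X_{1..3}) : mdeg m = (m i + m (pI i) + m (qI i))%N.
Proof.
rewrite mdegE !big_ord_recr big_ord0 /= add0n.
have e0 : widen_ord (leqnSn 2) (widen_ord (leqnSn 1) ord_max) = @Ordinal 3 0 isT by apply/val_inj.
have e1 : widen_ord (leqnSn 2) ord_max = @Ordinal 3 1 isT by apply/val_inj.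
have e2 : (ord_max : 'I_3) = @Ordinal 3 2 isT by apply/val_inj.
rewrite e0 e1 e2.
case: i => [[|[|[|//]]] hi]; rewrite /pI /qI /= (bool_irrelevance hi isT); lia.
Qed.

Section Main.
Variables (k : 'I_3 -> C) (i : 'I_3) (t n : nat).

Definition mu (a : nat) : 'X_{1..3} :=
  [multinom (if l == i then t else if l == pI i then a else (n - t - a)%N) | l < 3].

Lemma mu_p a : mu a (pI i) = a.
Proof. by rewrite mnmE (negbTE (pI_neq i)) eqxx. Qed.
Lemma mu_i a : mu a i = t.
Proof. by rewrite mnmE eqxx. Qed.
Lemma mu_q a : mu a (qI i) = (n - t - a)%N.
Proof. by rewrite mnmE (negbTE (qI_neq i)) eq_sym (negbTE (pq_neq i)). Qed.

Lemma mu_inj a b : mu a = mu b -> a = b.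
Proof. by move=> e; rewrite -(mu_p a) e mu_p. Qed.

Lemma mdeg_mu a : (t <= n)%N -> (a <= n - t)%N -> mdeg (mu a) = n.
Proof. by move=> h1 h2; rewrite (mdeg3 i) mu_p mu_i mu_q; lia. Qed.

Lemma mu_eq (m : 'X_{1..3}) : m i = t -> mdeg m = n -> m = mu (m (pI i)).
Proof.
move=> hi hd; have := mdeg3 i m; rewrite hd hi => hd'.
apply/mnmP => l; rewrite mnmE; case: eqP => [->//|/eqP h1].
case: eqP => [->//|/eqP h2].
rewrite (@ijcover i l h1 h2); lia.
Qed.

Let N := (n - t + 1)%N.

Definition sI (j : 'I_(2 * N)) : 'I_2 := if (j < N)%N then ord0 else ord_max.
Definition aI (j : 'I_(2 * N)) : nat := if (j < N)%N then nat_of_ord j else (j - N)%N.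

Lemma aI_lt j : (aI j < N)%N.
Proof. rewrite /aI; case: ifP => // /negbT; have := ltn_ord j; lia. Qed.

Lemma idx_inj j j' : aI j = aI j' -> sI j = sI j' -> j = j'.
Proof.
rewrite /aI /sI => ha hs; apply/val_inj => /=.
move: ha hs; case: ifP => h1; case: ifP => h2 //; lia.
Qed.

Lemma idx_ex a (r : 'I_2) : (a < N)%N -> exists j, aI j = a /\ sI j = r.
Proof.
move=> ha; case: r => [[|[|//]] hr].
  have hj : (a < 2 * N)%N by lia.
  exists (Ordinal hj); rewrite /aI /sI /= ha; split => //; exact: val_inj.
have hj : (a + N < 2 * N)%N by lia.
exists (Ordinal hj); rewrite /aI /sI /=; have -> : (a + N < N)%N = false by lia.
split; [lia | exact: val_inj].
Qed.

Lemma dirac0 : dirac k 0 = 0.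
Proof.
apply/ffunP => r; apply/mpolyP => m; rewrite [LHS]mcoeff_dirac ff0 mcoeff0.
by apply: big1 => j _; apply: big1 => s _; rewrite ff0 mcoeff0 !mulr0.
Qed.

Lemma dirac_sum (I : Type) (s : seq I) (Q : pred I) (G : I -> {ffun 'I_2 -> P}) :
  (forall j, dirac k (G j) = 0) -> dirac k (\sum_(j <- s | Q j) G j) = 0.
Proof.
move=> hG; elim/big_rec: _ => [|j x _ hx]; first exact: dirac0.
have := dirac_lin k 1 (G j) x; rewrite scale1r => ->.
by rewrite hG hx scaler0 addr0.
Qed.

Definition initf (j : 'I_(2 * N)) (m : 'X_{1..3}) (r : 'I_2) : C :=
  ((m == mu (aI j)) && (r == sI j))%:R.
Definition bj (j : 'I_(2 * N)) : {ffun 'I_2 -> P} := bvec k i t n (initf j).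

Lemma coef_bj j (m : 'X_{1..3}) r : (bj j r)@_m =
  if (mdeg m == n) && (t <= m i)%N then H k i (initf j) (m i - t) m r else 0.
Proof. by rewrite /bj mcoeff_bvec /V /F; case: eqP; case: leqP. Qed.

Lemma coef_bj_t j (m : 'X_{1..3}) r : m i = t -> (bj j r)@_m =
  ((mdeg m == n) && (m == mu (aI j)) && (r == sI j))%:R.
Proof.
move=> hm; rewrite coef_bj hm leqnn subnn andbT /= /initf.
by case: (mdeg m == n).
Qed.

Lemma main_case : odd t -> 2 * k i = - t%:R -> (t <= n)%N ->
  dimC_eq (@Mnx C k n i (Some t)) (2 * (n - t + 1)).
Proof.
move=> ht hk htn.
have hc : forall e, (t < e)%N -> cc (k i) e != 0 by move=> e; apply: cc_ne.
have hct : cc (k i) t = 0 by apply: cc_t.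
exists bj; split; [|split].
- move=> j; split; [split|].
  + move=> r m; rewrite mcoeff_msupp coef_bj.
    by case: andP => [[/eqP -> _]|] //; rewrite eqxx.
  + exact: bvec_dirac.
  + move=> r m; rewrite mcoeff_msupp coef_bj.
    by case: andP => [[_ ->]|] //; rewrite eqxx.
- move=> c hsum j0.
  have := congr1 (fun f : {ffun 'I_2 -> P} => (f (sI j0))@_(mu (aI j0))) hsum.
  rewrite /= ff0 mcoeff0 sum_ffunE raddf_sum /=.
  rewrite (bigD1 j0) //= big1 ?addr0.
    by rewrite ffZ mcoeffZ coef_bj_t ?mu_i // mdeg_mu // ?eqxx ?mulr1 //; have := aI_lt j0; rewrite /N; lia.
  move=> j hj; rewrite ffZ mcoeffZ coef_bj_t ?mu_i //.
  case: (mu (aI j0) =P mu (aI j)) => [/mu_inj e|]; last by rewrite andbF mulr0.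
  case: (sI j0 =P sI j) => [e'|]; last by rewrite andbF mulr0.
  by move: hj; rewrite (@idx_inj j0 j e e') eqxx.
- move=> v [[hhom hD] hsupp].
  exists (fun j => (v (sI j))@_(mu (aI j))).
  apply/eqP; rewrite -subr_eq0; apply/eqP.
  apply: (@uniq_kernel k i t); first exact: hc.
    set S := \sum_(j < 2 * (n - t + 1)) _.
    have -> : v - S = (-1) *: S + v by rewrite scaleN1r addrC.
    rewrite (dirac_lin k (-1) S v) hD addr0.
    have -> : dirac k S = 0.
      apply: dirac_sum => j.
      rewrite -[_ *: bj j]addr0 (dirac_lin k _ (bj j) 0) dirac0 addr0.
      by rewrite /bj (@bvec_dirac k i t n (initf j) hc hct) scaler0.
    by rewrite scaler0.
  move=> r m hm.
  rewrite ffB sum_ffunE mcoeffB raddf_sum /=.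
  rewrite (eq_bigr (fun j => (v (sI j))@_(mu (aI j)) * (bj j r)@_m)); last first.
    by move=> j _; rewrite ffZ mcoeffZ.
  have hv0 : (mdeg m != n) || (m i < t)%N -> (v r)@_m = 0.
    move=> h; apply/eqP; rewrite mcoeff_eq0; apply/negP => hin.
    have hd := hhom r m hin; have h1 := hsupp r m hin.
    by move: h; rewrite hd eqxx /= ltnNge h1.
  case: (ltnP (m i) t) => hlt.
    rewrite hv0 ?hlt ?orbT // big1 ?subrr // => j _.
    by rewrite coef_bj (leqNgt t) hlt andbF mulr0.
  have hmi : m i = t by apply/eqP; rewrite eqn_leq hm hlt.
  case: (eqVneq (mdeg m) n) => hdeg; last first.
    rewrite hv0 ?hdeg // big1 ?subrr // => j _.
    by rewrite coef_bj_t // (negbTE hdeg) /= mulr0.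
  have hma : m = mu (m (pI i)) := @mu_eq m hmi hdeg.
  have haN : (m (pI i) < N)%N.
    by have := mdeg3 i m; rewrite hdeg hmi /N; lia.
  have [j1 [ha1 hs1]] := @idx_ex (m (pI i)) r haN.
  rewrite (bigD1 j1) //= big1 ?addr0.
    rewrite coef_bj_t // hdeg eqxx ha1 hs1 -hma !eqxx /= mulr1.
    by rewrite subrr.
  move=> j hj; rewrite coef_bj_t //.
  case: (m =P mu (aI j)) => [e|]; last by rewrite andbF mulr0.
  case: (r =P sI j) => [e'|]; last by rewrite andbF mulr0.
  have ea : aI j1 = aI j by rewrite ha1; apply: mu_inj; rewrite -hma.
  by move: hj; rewrite (@idx_inj j j1 (esym ea) (etrans (esym e') (esym hs1))) eqxx.
Qed.


End Main.

End S.

Theorem proposition3p3 (C : numClosedFieldType) (k : 'I_3 -> C)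
    (hk : forall j, k j \is Num.real) (n : nat) (i : 'I_3) (t : option nat) :
  tparam (k i) t ->
  match t with
  | Some t =>
      ((n < t)%N -> dimC_eq (@Mnx C k n i (Some t)) 0) /\
      ((t <= n)%N -> dimC_eq (@Mnx C k n i (Some t)) (2 * (n - t + 1)))
  | None => dimC_eq (@Mnx C k n i None) 0
  end.
Proof.
case: t => [t|] /=.
- move=> [ht hki]; split.
  + move=> hnt; exists (fun j : 'I_0 => 0); split; first by case.
    split; first by move=> c _; case.
    move=> v [[hhom _] hsupp]; exists (fun _ => 0); rewrite big_ord0.
    apply/ffunP => r; apply/mpolyP => m; rewrite ff0 mcoeff0.
    apply/eqP; rewrite mcoeff_eq0; apply/negP => hin.
    have := hhom r m hin; have := hsupp r m hin; rewrite (mdeg3 i); lia.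
  + by move=> htn; apply: main_case.
- move=> _; exists (fun j : 'I_0 => 0); split; first by case.
  split; first by move=> c _; case.
  by move=> v ->; exists (fun _ => 0); rewrite big_ord0.
Qed.
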